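(* Let $\sigma:\mathbb{R}\to\mathbb{R}$ be either a continuous and strictly monotonic function or the ReLU function $\sigma(t)=\max\{t,0\}$. Then for all input and output dimensions $d_{in},d_{out}$, $d_{in}<\omega_{\min}(\sigma,d_{in},d_{out})$.
   Context: A neural network function $F:\mathbb{R}^{d_{in}}\to\mathbb{R}^{d_{out}}$ with $L$ layers and activation $\sigma$ has the form $F=W_L\circ A_{L-1}\circ\dots\circ A_1$, where $A_j(x)=\sigma(W_jx+b_j)$ with $W_j\in\mathbb{R}^{d_j\times d_{j-1}}$, $b_j\in\mathbb{R}^{d_j}$, $d_0=d_{in}$, $d_L=d_{out}$, and $\sigma$ applied componentwise. Its width is $\omega_F=\max\{d_j:j=1,\dots,L\}$. For $f:D\to\mathbb{R}^m$ write $\|f\|_D=\sup\{\|f(x)\|:x\in D\}$ (Euclidean norm). Fix real numbers $a<b$. $\omega_{\min}(\sigma,d_{in},d_{out})$ denotes the minimum width $\omega$ such that for every continuous $f:[a,b]^{d_{in}}\to\mathbb{R}^{d_{out}}$ and every $\varepsilon>0$ there exists a neural network function $F:\mathbb{R}^{d_{in}}\to\mathbb{R}^{d_{out}}$ with activation $\sigma$ and $\omega_F\le\omega$ such that $\|f-F\|_{[a,b]^{d_{in}}}<\varepsilon$. *)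

(* Defs.v *)
From HB Require Import structures.
From mathcomp Require Import all_boot all_order all_algebra.
From mathcomp Require Import all_classical all_reals all_analysis.
Set Implicit Arguments. Unset Strict Implicit. Unset Printing Implicit Defensive.
Import Order.TTheory GRing.Theory Num.Theory.
Import numFieldNormedType.Exports.
Local Open Scope classical_set_scope.
Local Open Scope ring_scope.

(* A neural network from R^m to R^n (vectors are column vectors 'cV_m).
   [NLast W]        : the final linear layer x |-> W x   (W : d_L x d_{L-1})
   [NLayer W b N]   : x |-> N (sigma (W x + b))           (W : k x m, b : R^k) *)
Inductive net (R : Type) : nat -> nat -> Type :=
| NLast : forall m n : nat, 'M[R]_(n, m) -> net R m n
| NLayer : forall m k n : nat, 'M[R]_(k, m) -> 'cV[R]_k -> net R k n -> net R m n.

Fixpoint net_eval (R : realType) (sigma : R -> R) (m n : nat) (N : net R m n)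
  : 'cV[R]_m -> 'cV[R]_n :=
  match N in net _ m n return 'cV[R]_m -> 'cV[R]_n with
  | NLast _ _ W => fun x => W *m x
  | NLayer _ _ _ W b N' => fun x =>
      net_eval sigma N' (map_mx sigma (W *m x + b))
  end.

Fixpoint net_width (R : Type) (m n : nat) (N : net R m n) : nat :=
  match N with
  | NLast _ n _ => n
  | NLayer _ k _ _ _ N' => maxn k (net_width N')
  end.

Definition eucl_norm (R : realType) (n : nat) (v : 'cV[R]_n) : R :=
  Num.sqrt (\sum_(i < n) v i ord0 ^+ 2).

Definition cube (R : realType) (d : nat) (a b : R) : set 'cV[R]_d :=
  [set x | forall i : 'I_d, a <= x i ord0 <= b].

(* ||f - F||_D < eps, with ||g||_D = sup_{x in D} ||g x|| *)
Definition sup_dist_lt (R : realType) (m n : nat) (D : set 'cV[R]_m)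
  (f F : 'cV[R]_m -> 'cV[R]_n) (eps : R) : Prop :=
  exists2 M : R, M < eps & forall x, D x -> eucl_norm (f x - F x) <= M.

(* omega is an admissible width: every continuous f on [a,b]^din is
   eps-approximable by a sigma-network of width <= omega.
   omega_min(sigma,din,dout) is the least such omega. *)
Definition universal_width (R : realType) (sigma : R -> R) (a b : R)
  (din dout omega : nat) : Prop :=
  forall f : 'cV[R]_din -> 'cV[R]_dout,
    {within @cube R din a b, continuous f} ->
    forall eps : R, 0 < eps ->
    exists N : net R din dout,
      (net_width N <= omega)%N /\ sup_dist_lt (@cube R din a b) f (net_eval sigma N) eps.

Definition relu (R : realType) (t : R) : R := Num.max t 0.

Definition strictly_monotonic (R : realType) (sigma : R -> R) : Prop :=
  (forall x y, x < y -> sigma x < sigma y) \/ (forall x y, x < y -> sigma y < sigma x).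

(* Main.v *)
Require Import Defs.
From HB Require Import structures.
From mathcomp Require Import all_boot all_order all_algebra.
From mathcomp Require Import all_classical all_reals all_analysis.
From mathcomp Require Import lra ring.
Import Order.TTheory GRing.Theory Num.Theory.
Import numFieldNormedType.Exports.
Local Open Scope classical_set_scope.
Local Open Scope ring_scope.
Section S.
Variable R : realType.

Lemma mx_cont_entry (T : topologicalType) m n (f : T -> 'M[R]_(m, n)) :
  (forall i j, continuous (fun x => f x i j)) -> continuous f.
Proof.
move=> H x A /nbhs_ballP [e e0 eA].
have : \forall y \near x, forall ij : 'I_m * 'I_n, ball (f x ij.1 ij.2) e (f y ij.1 ij.2).
  apply: filter_forall => -[i j] /=.
  exact: (H i j x _ (nbhsx_ballx _ _ e0)).
apply: filterS => y Hy; apply: eA; split => // i j; exact: (Hy (i, j)).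
Qed.

Lemma cont_sum (T : topologicalType) n (F : 'I_n -> T -> R) :
  (forall j, continuous (F j)) -> continuous (fun x => \sum_j F j x).
Proof.
move=> H.
suff : forall s : seq 'I_n, continuous (fun x => \sum_(j <- s) F j x) by apply.
elim => [|j s IH].
  under eq_fun do rewrite big_nil. exact: cst_continuous.
under eq_fun do rewrite big_cons.
move=> x; apply: continuousD; [exact: H | exact: IH].
Qed.

Lemma mulmx_cont m n p (W : 'M[R]_(m, n)) :
  continuous (fun x : 'M[R]_(n, p) => W *m x).
Proof.
apply: mx_cont_entry => i j.
under eq_fun do rewrite mxE.
apply: cont_sum => k x.
apply: continuousM; [exact: cst_continuous | exact: coord_continuous].
Qed.

Lemma map_mx_cont m n (s : R -> R) : continuous s ->
  continuous (fun x : 'M[R]_(m, n) => map_mx s x).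
Proof.
move=> hs; apply: mx_cont_entry => i j.
under eq_fun do rewrite mxE.
move=> x; apply: continuous_comp; [exact: coord_continuous | exact: hs].
Qed.

Lemma trmx_cont m n : continuous (fun x : 'M[R]_(m, n) => x^T).
Proof.
apply: mx_cont_entry => i j.
under eq_fun do rewrite mxE.
exact: coord_continuous.
Qed.

Lemma cube_compact d (a b : R) : compact (@cube R d a b).
Proof.
have -> : @cube R d a b = (fun v : 'rV[R]_d => v^T) @`
   [set v : 'rV[R]_d | forall i, `[a, b]%classic (v ord0 i)].
  apply/seteqP; split => x /=.
    move=> H; exists x^T; last by rewrite trmxK.
    move=> i; rewrite /= mxE in_itv /=; exact: H.
  move=> [v Hv <-] i; rewrite mxE; move: (Hv i); rewrite /= in_itv /=; done.
apply: (@continuous_compact _ _ (fun v : 'rV[R]_d => v^T)).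
  apply: continuous_subspaceT => x; exact: trmx_cont.
apply: (@rV_compact _ _ (fun=> `[a, b]%classic)) => i; exact: segment_compact.
Qed.


Lemma ballR (t e y : R) : ball t e y <-> `|t - y| < e.
Proof. by rewrite -ball_normE. Qed.

Lemma sig_nbhs (s : R -> R) : continuous s -> strictly_monotonic s ->
  forall t e, 0 < e -> nbhs (s t) (s @` ball t e).
Proof.
move=> cs ms t e e0.
set h := e / 2.
have h0 : 0 < h by rewrite /h divr_gt0.
have he : h < e by rewrite /h; lra.
have key : forall w, Num.min (s (t - h)) (s (t + h)) <= w <= Num.max (s (t - h)) (s (t + h)) ->
   (s @` ball t e) w.
  move=> w Hw.
  have := @IVT R s (t - h) (t + h) w.
  case.
  - lra.
  - apply: continuous_subspaceT => x; exact: cs.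
  - exact: Hw.
  move=> c; rewrite in_itv /= => /andP [c1 c2] <-.
  exists c => //; apply/ballR.
  rewrite ltr_distlC; apply/andP; split; lra.
apply/nbhs_ballP.
case: ms => [inc|dec].
- have p1 : s (t - h) < s t by apply: inc; lra.
  have p2 : s t < s (t + h) by apply: inc; lra.
  exists (Num.min (s t - s (t - h)) (s (t + h) - s t)).
    rewrite /= lt_min; apply/andP; split; lra.
  move=> w /ballR; rewrite lt_min => /andP [w1 w2].
  apply: key.
  move: w1 w2; rewrite ltr_norml => /andP [w1 w3] /[!ltr_norml] /andP [w2 w4].
  rewrite ge_min le_max; apply/andP; split; apply/orP; [left|right]; lra.
- have p1 : s t < s (t - h) by apply: dec; lra.
  have p2 : s (t + h) < s t by apply: dec; lra.
  exists (Num.min (s (t - h) - s t) (s t - s (t + h))).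
    rewrite /= lt_min; apply/andP; split; lra.
  move=> w /ballR; rewrite lt_min => /andP [w1 w2].
  apply: key.
  move: w1 w2; rewrite ltr_norml => /andP [w1 w3] /[!ltr_norml] /andP [w2 w4].
  rewrite ge_min le_max; apply/andP; split; apply/orP; [right|left]; lra.
Qed.

Lemma smap_open m n (s : R -> R) : continuous s -> strictly_monotonic s ->
  forall U : set 'M[R]_(m, n), open U -> open ((fun x => map_mx s x) @` U).
Proof.
move=> cs ms U; rewrite !openE => oU z [y Uy <-].
have /nbhs_ballP [e e0 eU] := oU y Uy.
rewrite /interior.
have H : forall ij : 'I_m * 'I_n, \forall z' \near (map_mx s y : 'M[R]_(m, n)),
    (s @` ball (y ij.1 ij.2) e) ((z' : 'M[R]_(m, n)) ij.1 ij.2).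
  move=> [i j] /=.
  have hc := @coord_continuous R m n i j (map_mx s y).
  have hn : nbhs ((map_mx s y) i j) (s @` ball (y i j) e).
    rewrite mxE; exact: sig_nbhs.
  exact: (hc _ hn).
have HH := @filter_forall _ _ _ _ (nbhs_filter _) H.
apply: (@filterS _ _ (nbhs_filter _) _ _ _ HH) => z' Hz'.
have Hz2 : forall ij : 'I_m * 'I_n, exists t, ball (y ij.1 ij.2) e t /\ s t = z' ij.1 ij.2.
  by move=> ij; have [t ht1 ht2] := Hz' ij; exists t.
have [g Hg] := boolp.choice Hz2.
exists (\matrix_(i, j) g (i, j)).
  apply: eU; split => // i j; rewrite mxE; exact: (Hg (i, j)).1.
apply/matrixP => i j; rewrite !mxE; exact: (Hg (i, j)).2.
Qed.

Lemma affine_open m p (W : 'M[R]_m) (bb : 'M[R]_(m, p)) : W \in unitmx ->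
  forall U, open U -> open ((fun x => W *m x + bb) @` U).
Proof.
move=> Wu U oU.
have -> : (fun x => W *m x + bb) @` U = (fun z => invmx W *m (z - bb)) @^-1` U.
  apply/seteqP; split => z /=.
    by move=> [y Uy <-]; rewrite addrK mulKmx.
  move=> Uz; exists (invmx W *m (z - bb)) => //; by rewrite mulKVmx // subrK.
apply: open_comp => // x _.
apply: continuous_comp; last exact: mulmx_cont.
by apply: continuousB; [exact: cvg_id | exact: cst_continuous].
Qed.

Section SL.
Variables (din : nat) (a b : R).
Hypothesis hab : a < b.
Definition Bo := [set x : 'cV[R]_din | forall i, a < x i ord0 < b].
Definition cc : 'cV[R]_din := const_mx ((a + b) / 2).

Lemma Bo_cc : Bo cc.
Proof. by move=> i; rewrite mxE; have := hab; move=> h; apply/andP; split; lra. Qed.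

Lemma Bo_cube : Bo `<=` @cube R din a b.
Proof. by move=> x H i; have /andP [h1 h2] := H i; rewrite !ltW. Qed.

Lemma diff_scale m (y v : 'cV[R]_m) (T s : R) :
  (y + T *: v) - (y + s *: v) = (T - s) *: v.
Proof. by rewrite scalerBl opprD addrACA subrr add0r. Qed.

Lemma SL m (G : 'cV[R]_din -> 'cV[R]_m) : continuous G -> open (G @` Bo) ->
  forall v, v != 0 -> exists T, 0 <= T /\ exists q, @cube R din a b q /\ ~ Bo q /\
    G q = G cc + T *: v.
Proof.
move=> cG oG v v0.
have cB : compact (G @` @cube R din a b).
  apply: continuous_compact; last exact: cube_compact.
  apply: continuous_subspaceT => x; exact: cG.
have clB : closed (G @` @cube R din a b) by apply: compact_closed.
have [M HM] : exists M, forall y, (G @` @cube R din a b) y -> `|y| <= M.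
  have [M [_ HM]] := compact_bounded cB.
  exists (M + 1); apply: HM; lra.
have nv : 0 < `|v| by rewrite normr_gt0.
set S := [set t : R | 0 <= t /\ forall s, 0 <= s <= t -> (G @` Bo) (G cc + s *: v)].
have S0 : S 0.
  split => // s /andP [s1 s2]; have -> : s = 0 by lra.
  rewrite scale0r addr0; exists cc => //; exact: Bo_cc.
have hs : has_sup S.
  split; first by exists 0.
  exists ((M + `|G cc|) / `|v|) => t [t0 Ht].
  have [x Bx Gx] := Ht t (ltac:(by rewrite lexx andbT)).
  have := HM _ (ltac:(by exists x => //; exact: Bo_cube)).
  rewrite Gx => Hy.
  rewrite ler_pdivlMr //.
  have : `|t *: v| <= `|G cc + t *: v| + `|G cc|.
    have -> : `|t *: v| = `|(G cc + t *: v) - G cc| by rewrite addrAC subrr add0r.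
    exact: ler_normB.
  rewrite normrZ ger0_norm //; lra.
set T := sup S.
have T0 : 0 <= T by exact: sup_upper_bound hs 0 S0.
have D : forall s, 0 <= s -> s < T -> (G @` Bo) (G cc + s *: v).
  move=> s s0 sT.
  have eps0 : 0 < T - s by rewrite subr_gt0.
  have [t [t0 Ht] Hlt] := sup_adherent eps0 hs.
  apply: Ht; apply/andP; split => //; rewrite -/T in Hlt; lra.
have A : (G @` @cube R din a b) (G cc + T *: v).
  apply: clB => B /nbhs_ballP [e e0 eB].
  have [T00|Tpos] := eqVneq T 0.
    exists (G cc); split.
      exists cc => //; apply: Bo_cube; exact: Bo_cc.
    apply: eB; rewrite T00 scale0r addr0; exact: ballxx.
  have Tp : 0 < T by rewrite lt_neqAle eq_sym Tpos T0.
  set d := Num.min T (e / (2 * `|v|)).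
  have d0 : 0 < d by rewrite lt_min Tp /= divr_gt0 // mulr_gt0.
  have dT : d <= T by rewrite ge_min lexx.
  have de : d * `|v| <= e / 2.
    have : d <= e / (2 * `|v|) by rewrite ge_min lexx orbT.
    rewrite ler_pdivlMr ?mulr_gt0 //; lra.
  exists (G cc + (T - d) *: v); split.
    have [x Bx Gx] := D (T - d) (ltac:(lra)) (ltac:(lra)).
    exists x => //; exact: Bo_cube.
  apply: eB; rewrite -ball_normE /= diff_scale normrZ.
  have -> : T - (T - d) = d by lra.
  have e0' : 0 < e := e0; rewrite ger0_norm; lra.
have NB : ~ (G @` Bo) (G cc + T *: v).
  move=> H; move: oG; rewrite openE => /(_ _ H) /nbhs_ballP [e e0 eB].
  set t' := T + e / (2 * `|v|).
  have et : 0 < e / (2 * `|v|) by rewrite divr_gt0 // mulr_gt0.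
  have St' : S t'.
    split; first by rewrite /t'; lra.
    move=> s /andP [s0 st].
    have [sT|Ts] := ltP s T; first exact: D.
    apply: eB; rewrite -ball_normE /= diff_scale normrZ ler0_norm; last lra.
    have : (s - T) * `|v| <= e / 2.
      have : s - T <= e / (2 * `|v|) by rewrite /t' in st; lra.
      rewrite ler_pdivlMr ?mulr_gt0 //; lra.
    have e0' : 0 < e := e0; lra.
  have := sup_upper_bound hs St'; rewrite -/T /t'; lra.
have [q Bq Gq] := A.
exists T; split => //; exists q; split => //; split => //.
move=> Boq; apply: NB; exists q => //.
Qed.
End SL.


Lemma ker_vec k m (W : 'M[R]_(k, m)) : (\rank W < m)%N ->
  exists v : 'cV[R]_m, v != 0 /\ W *m v = 0.
Proof.
move=> Hr.
set K := kermx W^T.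
have rK : \rank K = (m - \rank W)%N by rewrite mxrank_ker mxrank_tr.
have [i Hi] : exists i, row i K != 0.
  apply: boolp.contrapT => H.
  have K0 : K = 0.
    apply/row_matrixP => i; rewrite row0; apply/eqP.
    by apply: boolp.contrapT => Hn; apply: H; exists i; apply/negP.
  by move: rK; rewrite K0 mxrank0; move/eqP; rewrite eq_sym subn_eq0 leqNgt Hr.
exists (row i K)^T; split.
  by apply: contra Hi => /eqP H; rewrite -[row i K]trmxK H trmx0.
by rewrite -[W]trmxK -trmx_mul -row_mul mulmx_ker row0 trmx0.
Qed.

Lemma Bo_open din (a b : R) : open (@Bo din a b).
Proof.
rewrite openE => x Bx.
have H : forall i : 'I_din, \forall y \near x, a < (y : 'cV[R]_din) i ord0 < b.
  move=> i.
  have hc := @coord_continuous R din 1 i ord0 x.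
  have hn : nbhs (x i ord0) [set t : R | a < t < b].
    have := @near_in_itvoo R a b (x i ord0).
    rewrite in_itv /=; move=> /(_ (Bx i)).
    by apply: filterS => t; rewrite in_itv.
  exact: (hc _ hn).
have := @filter_forall _ _ _ _ (nbhs_filter _) H.
rewrite /interior; apply: filterS => y Hy i; exact: Hy i.
Qed.


Section Mono.
Variables (din : nat) (a b : R) (s : R -> R).
Hypothesis hab : a < b.
Hypothesis hdin : (0 < din)%N.
Hypothesis cs : continuous s.
Hypothesis ms : strictly_monotonic s.

Lemma mulmx_shift k m (W : 'M[R]_(k, m)) (y v : 'cV[R]_m) (T : R) :
  W *m (y + T *: v) = W *m y + T *: (W *m v).
Proof. by rewrite mulmxDr scalemxAr. Qed.

Lemma mono_main m n (N : net R m n) : (net_width N <= din)%N -> (din <= m)%N ->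
  forall G : 'cV[R]_din -> 'cV[R]_m, continuous G -> open (G @` Bo din a b) ->
  forall i0 : 'I_n, exists q, @cube R din a b q /\ ~ Bo din a b q /\
    (net_eval s N (G q)) i0 ord0 <= (net_eval s N (G (cc din a b))) i0 ord0.
Proof.
elim: N => [m' n' W | m' k n' W bb N' IH] /= Hw Hdm G cG oG i0.
- set v : 'cV[R]_m' := if row i0 W == 0 then const_mx 1 else - (row i0 W)^T.
  have v0 : v != 0.
    rewrite /v; case: ifP => H.
      apply/eqP => /matrixP /(_ (Ordinal (leq_trans hdin Hdm)) ord0).
      by rewrite !mxE; apply/eqP; rewrite oner_eq0.
    rewrite oppr_eq0; apply: contraFN H => /eqP H.
    by rewrite -[row i0 W]trmxK H trmx0.
  have [T [T0 [q [Bq [NBq Gq]]]]] := @SL din a b hab _ G cG oG _ v0.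
  exists q; split => //; split => //.
  rewrite Gq mulmx_shift !mxE gerDl.
  apply: mulr_ge0_le0 => //.
  rewrite /v; case: ifP => H.
    rewrite big1 // => j _.
    move/eqP: H => /matrixP /(_ ord0 j); rewrite !mxE => ->; by rewrite mul0r.
  rewrite -oppr_ge0 -sumrN; apply: sumr_ge0 => j _.
  by rewrite !mxE mulrN opprK -expr2 sqr_ge0.
- have /andP [Hk HwN] : (k <= din)%N && (net_width N' <= din)%N by rewrite -geq_max.
  have [Hr|Hr] := eqVneq (\rank W) m'.
  + have ekm : k = m'.
      apply/eqP; rewrite eqn_leq; apply/andP; split.
        exact: leq_trans Hk Hdm.
      by rewrite -{1}Hr rank_leq_row.
    subst k.
    have Wu : W \in unitmx by rewrite -row_free_unit /row_free Hr.
    have := IH HwN Hdm (fun x => map_mx s (W *m G x + bb)) _ _ i0.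
    apply.
      move=> x; apply: continuous_comp; last exact: map_mx_cont.
      apply: continuousD; last exact: cst_continuous.
      apply: continuous_comp; [exact: cG | exact: mulmx_cont].
    have -> : (fun x => map_mx s (W *m G x + bb)) @` Bo din a b =
        (fun y => map_mx s y) @` ((fun y => W *m y + bb) @` (G @` Bo din a b)).
      by rewrite !image_comp.
    apply: smap_open => //; exact: affine_open.
  + have Hlt : (\rank W < m')%N by rewrite ltn_neqAle Hr rank_leq_col.
    have [v [v0 Wv]] := @ker_vec k m' W Hlt.
    have [T [T0 [q [Bq [NBq Gq]]]]] := @SL din a b hab _ G cG oG _ v0.
    exists q; split => //; split => //.
    by rewrite Gq mulmx_shift Wv scaler0 addr0.
Qed.

Lemma mono_final dout (N : net R din dout) : (net_width N <= din)%N ->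
  forall i0 : 'I_dout, exists q, @cube R din a b q /\ ~ Bo din a b q /\
    (net_eval s N q) i0 ord0 <= (net_eval s N (cc din a b)) i0 ord0.
Proof.
move=> Hw i0.
have := @mono_main din dout N Hw (leqnn _) id (fun x => cvg_id) _ i0.
rewrite image_id; apply; exact: Bo_open.
Qed.
End Mono.


Definition lrelu (d t : R) : R := ((1 + d) * t + (1 - d) * `|t|) / 2.

Lemma relu_lrelu : @relu R = lrelu 0.
Proof.
apply: boolp.funext => t; rewrite /relu /lrelu.
rewrite /Order.max; case: ltP => t0.
  by rewrite ltr0_norm //; lra.
by rewrite ger0_norm //; lra.
Qed.

Lemma lrelu_lip d s t : 0 <= d <= 1 -> `|lrelu d s - lrelu d t| <= `|s - t|.
Proof.
move=> /andP [d0 d1]; rewrite /lrelu.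
have h1 := ler_norm (s - t).
have h2 : - (s - t) <= `|s - t| by rewrite -normrN ler_norm.
have h3 := lerB_dist s t.
have h4 : `|t| - `|s| <= `|s - t| by rewrite distrC lerB_dist.
rewrite ler_norml; apply/andP; split; nra.
Qed.

Lemma lrelu_err d t : 0 <= d -> `|lrelu d t - lrelu 0 t| <= d * `|t|.
Proof.
move=> d0; rewrite /lrelu.
have h1 := ler_norm t.
have h2 : - t <= `|t| by rewrite -normrN ler_norm.
rewrite ler_norml; apply/andP; split; nra.
Qed.

Lemma lrelu0_bound t : `|lrelu 0 t| <= `|t|.
Proof.
rewrite /lrelu.
have h1 := ler_norm t.
have h2 : - t <= `|t| by rewrite -normrN ler_norm.
rewrite ler_norml; apply/andP; split; lra.
Qed.

Lemma lrelu_incr d s t : 0 < d <= 1 -> s < t -> lrelu d s < lrelu d t.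
Proof.
move=> /andP [d0 d1] st; rewrite /lrelu.
have h3 : `|s| - `|t| <= `|s - t| := lerB_dist s t.
have h4 : `|s - t| = t - s by rewrite distrC gtr0_norm // subr_gt0.
nra.
Qed.

Lemma lip_cont (f : R -> R) : (forall s t, `|f s - f t| <= `|s - t|) -> continuous f.
Proof.
move=> H x A /nbhs_ballP [e e0 eA]; apply/nbhs_ballP; exists e => // y /ballR hy.
apply: eA; apply/ballR; exact: le_lt_trans (H x y) hy.
Qed.


Definition matK {k m} (W : 'M[R]_(k, m)) : R := \sum_i \sum_j `|W i j|.
Definition vecK {k} (v : 'cV[R]_k) : R := \sum_i `|v i ord0|.

Lemma matK_ge0 k m (W : 'M[R]_(k, m)) : 0 <= matK W.
Proof. by apply: sumr_ge0 => i _; apply: sumr_ge0 => j _. Qed.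

Lemma vecK_ge0 k (v : 'cV[R]_k) : 0 <= vecK v.
Proof. by apply: sumr_ge0 => i _. Qed.

Lemma vecK_bound k (v : 'cV[R]_k) i : `|v i ord0| <= vecK v.
Proof.
rewrite /vecK (bigD1 i) //= lerDl; apply: sumr_ge0 => j _ //.
Qed.

Lemma lin_bound k m (W : 'M[R]_(k, m)) (x : 'cV[R]_m) B : 0 <= B ->
  (forall j, `|x j ord0| <= B) -> forall i, `|(W *m x) i ord0| <= matK W * B.
Proof.
move=> B0 Hx i; rewrite mxE.
apply: (le_trans (ler_norm_sum _ _ _)).
apply: (@le_trans _ _ ((\sum_j `|W i j|) * B)).
  rewrite mulr_suml; apply: ler_sum => j _.
  by rewrite normrM; apply: ler_wpM2l.
apply: ler_wpM2r => //.
rewrite /matK (bigD1 i) //= lerDl; apply: sumr_ge0 => l _; exact: sumr_ge0.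
Qed.

Lemma net_lip m n (N : net R m n) : exists K : R, 0 <= K /\
  forall s : R -> R, (forall u w : R, `|s u - s w| <= `|u - w|) ->
  forall (x y : 'cV[R]_m) (B : R), 0 <= B -> (forall j, `|x j ord0 - y j ord0| <= B) ->
  forall i, `|net_eval s N x i ord0 - net_eval s N y i ord0| <= K * B.
Proof.
elim: N => [m' n' W | m' k n' W bb N' [K [K0 IH]]].
- exists (matK W); split; first exact: matK_ge0.
  move=> s Hs x y B B0 Hxy i /=.
  have -> : (W *m x) i ord0 - (W *m y) i ord0 = (W *m (x - y)) i ord0.
    by rewrite mulmxBr !mxE.
  apply: lin_bound => // j; rewrite !mxE; exact: Hxy.
- exists (K * matK W); split; first by rewrite mulr_ge0 // matK_ge0.
  move=> s Hs x y B B0 Hxy i /=.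
  rewrite -mulrA; apply: IH => //; first by rewrite mulr_ge0 // matK_ge0.
  move=> j.
  have E : forall z : 'cV[R]_m', (map_mx s (W *m z + bb)) j ord0 = s ((W *m z + bb) j ord0).
    by move=> z; rewrite mxE.
  rewrite !E; apply: (le_trans (Hs _ _)).
  have -> : (W *m x + bb) j ord0 - (W *m y + bb) j ord0 = (W *m (x - y)) j ord0.
    by rewrite mulmxBr !mxE; lra.
  apply: lin_bound => // l; rewrite !mxE; exact: Hxy.
Qed.


Lemma net_pert m n (N : net R m n) : exists K1 K2 : R, 0 <= K1 /\ 0 <= K2 /\
  forall d : R, 0 <= d <= 1 ->
  forall (x : 'cV[R]_m) (B : R), 0 <= B -> (forall j, `|x j ord0| <= B) ->
  forall i, `|net_eval (lrelu d) N x i ord0 - net_eval (lrelu 0) N x i ord0| <= d * (K1 * B + K2).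
Proof.
elim: N => [m' n' W | m' k n' W bb N' [K1 [K2 [K10 [K20 IH]]]]].
- exists 0, 0; split => //; split => // d /andP [d0 d1] x B B0 Hx i /=.
  by rewrite subrr normr0 mul0r addr0 mulr0.
- have [K [K0 HL]] := @net_lip _ _ N'.
  exists ((K + K1) * matK W), ((K + K1) * vecK bb + K2).
  split; first by rewrite mulr_ge0 ?addr_ge0 // matK_ge0.
  split; first by rewrite addr_ge0 // mulr_ge0 ?addr_ge0 // vecK_ge0.
  move=> d /andP [d0 d1] x B B0 Hx i /=.
  set u := W *m x + bb.
  set Bu := matK W * B + vecK bb.
  have Bu0 : 0 <= Bu by rewrite addr_ge0 ?vecK_ge0 // mulr_ge0 // matK_ge0.
  have Hu : forall j, `|u j ord0| <= Bu.
    move=> j; rewrite /u mxE.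
    apply: (le_trans (ler_normD _ _)); apply: lerD.
      exact: lin_bound.
    exact: vecK_bound.
  have H1 : `|net_eval (lrelu d) N' (map_mx (lrelu d) u) i ord0 -
              net_eval (lrelu d) N' (map_mx (lrelu 0) u) i ord0| <= K * (d * Bu).
    apply: HL.
    - move=> s t; apply: lrelu_lip; by rewrite d0 d1.
    - by rewrite mulr_ge0.
    - move=> j.
      have E1 : forall f : R -> R, (map_mx f u) j ord0 = f (u j ord0) by move=> f; rewrite mxE.
      rewrite !E1.
      apply: (le_trans (lrelu_err _ _ d0)).
      by apply: ler_wpM2l.
  have H2 : `|net_eval (lrelu d) N' (map_mx (lrelu 0) u) i ord0 -
              net_eval (lrelu 0) N' (map_mx (lrelu 0) u) i ord0| <= d * (K1 * Bu + K2).
    apply: IH => //; first by rewrite d0 d1.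
    move=> j; rewrite mxE; apply: (le_trans (lrelu0_bound _)); exact: Hu.
  have E : K * (d * Bu) + d * (K1 * Bu + K2) =
      d * ((K + K1) * matK W * B + ((K + K1) * vecK bb + K2)).
    rewrite /Bu; ring.
  rewrite -E; apply: (le_trans (ler_distD _ _ _)); exact: lerD H1 H2.
Qed.


Lemma relu_final din (a b : R) (hab : a < b) (hdin : (0 < din)%N) dout
  (N : net R din dout) : (net_width N <= din)%N -> forall (i0 : 'I_dout) (eta : R), 0 < eta ->
  exists q, @cube R din a b q /\ ~ Bo din a b q /\
    net_eval (@relu R) N q i0 ord0 <= net_eval (@relu R) N (cc din a b) i0 ord0 + eta.
Proof.
move=> Hw i0 eta eta0.
have [K1 [K2 [K10 [K20 HP]]]] := @net_pert _ _ N.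
set B0 := `|a| + `|b|.
have B00 : 0 <= B0 by rewrite addr_ge0.
have cubeB : forall x, @cube R din a b x -> forall j, `|x j ord0| <= B0.
  move=> x Hx j; have /andP [h1 h2] := Hx j.
  have ha : - `|a| <= a by rewrite lerNl -normrN ler_norm.
  have hb : b <= `|b| by rewrite ler_norm.
  have na := normr_ge0 a; have nb := normr_ge0 b.
  rewrite ler_norml; apply/andP; split; rewrite /B0; lra.
have ccB : @cube R din a b (cc din a b) by apply: Bo_cube; exact: Bo_cc.
set C := K1 * B0 + K2.
have C0 : 0 <= C by rewrite addr_ge0 // mulr_ge0.
set d := Num.min (1 / 2) (eta / (2 * (C + 1))).
have d0 : 0 < d by rewrite lt_min; apply/andP; split; [lra | rewrite divr_gt0 //; lra].
have d1 : d <= 1 by rewrite ge_min; apply/orP; left; lra.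
have dC : d * C <= eta / 2.
  have : d <= eta / (2 * (C + 1)) by rewrite ge_min lexx orbT.
  rewrite ler_pdivlMr; last lra.
  nra.
have cs : continuous (lrelu d).
  apply: lip_cont => u w; apply: lrelu_lip; apply/andP; split => //; exact: ltW.
have ms : strictly_monotonic (lrelu d).
  left => u w; apply: lrelu_incr; apply/andP; split => //.
have [q [Bq [NBq Hq]]] := @mono_final din a b (lrelu d) hab hdin cs ms dout N Hw i0.
exists q; split => //; split => //.
have dd : 0 <= d <= 1 by apply/andP; split => //; exact: ltW.
have E1 := HP d dd q B0 B00 (cubeB q Bq) i0.
have E2 := HP d dd (cc din a b) B0 B00 (cubeB _ ccB) i0.
rewrite -/C in E1 E2.
move: E1 E2; rewrite relu_lrelu !ler_norml => /andP [e1 e2] /andP [e3 e4].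
lra.
Qed.

Lemma entry_le_eucl n (v : 'cV[R]_n) i : `|v i ord0| <= eucl_norm v.
Proof.
rewrite /eucl_norm -sqrtr_sqr; apply: ler_wsqrtr.
rewrite (bigD1 i) //= lerDl; apply: sumr_ge0 => j _; exact: sqr_ge0.
Qed.

End S.

Theorem corollary11 (R : realType) (a b : R) (hab : a < b) (sigma : R -> R)
  (hsigma : (continuous sigma /\ strictly_monotonic sigma) \/ sigma = @relu R)
  (din dout : nat) (hdin : (0 < din)%N) (hdout : (0 < dout)%N) :
  forall omega : nat, universal_width sigma a b din dout omega -> (din < omega)%N.
Proof.
move=> omega Hu; rewrite ltnNge; apply/negP => Hom.
pose i0 : 'I_dout := Ordinal hdout.
pose c0 := (a + b) / 2.
pose g := fun x : 'cV[R]_din => \sum_j (x j ord0 - c0) * (x j ord0 - c0).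
pose f := fun x : 'cV[R]_din => (\col_(i < dout) (if i == i0 then g x else 0) : 'cV[R]_dout).
have cf : {within @cube R din a b, continuous f}.
  apply: continuous_subspaceT; apply: mx_cont_entry => i j.
  rewrite /f; under eq_fun do rewrite mxE.
  case: (i == i0); last exact: cst_continuous.
  apply: cont_sum => j' x.
  apply: (@continuous_comp _ _ _ (fun y : 'cV[R]_din => y j' ord0)
     (fun t => (t - c0) * (t - c0))).
    exact: coord_continuous.
  by apply: cvgM; apply: cvgB; [exact: cvg_id | exact: cvg_cst | exact: cvg_id | exact: cvg_cst].
pose r2 := ((b - a) / 2) * ((b - a) / 2).
have r20 : 0 < r2 by rewrite /r2 mulr_gt0 //; lra.
have [N [HwN [M HM Hd]]] := Hu f cf (r2 / 4) (ltac:(lra)).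
have Hw : (net_width N <= din)%N by exact: leq_trans HwN Hom.
have [q [Bq [NBq Hq]]] : exists q, @cube R din a b q /\ ~ Bo R din a b q /\
    net_eval sigma N q i0 ord0 <= net_eval sigma N (cc R din a b) i0 ord0 + r2 / 4.
  case: hsigma => [[cs ms] | ->].
    have [q [Bq [NBq Hq]]] := @mono_final R din a b sigma hab hdin cs ms dout N Hw i0.
    exists q; split => //; split => //; lra.
  apply: (@relu_final R din a b hab hdin dout N Hw i0 (r2 / 4)); lra.
have ccB : @cube R din a b (cc R din a b) by apply: Bo_cube; exact: Bo_cc.
have fE : forall x, f x i0 ord0 = g x by move=> x; rewrite mxE eqxx.
have comp : forall x, @cube R din a b x ->
    `|g x - net_eval sigma N x i0 ord0| <= M.
  move=> x Bx; rewrite -fE.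
  have := @entry_le_eucl R dout (f x - net_eval sigma N x) i0.
  have E : (f x - net_eval sigma N x) i0 ord0 = f x i0 ord0 - net_eval sigma N x i0 ord0.
    by rewrite !mxE.
  rewrite E => H.
  apply: le_trans H _; exact: Hd.
have gc : g (cc R din a b) = 0.
  rewrite /g big1 // => j _; rewrite mxE /c0; lra.
have gq : r2 <= g q.
  have [j Hj] : exists j, ~ (a < q j ord0 < b).
    apply: boolp.contrapT => H; apply: NBq => j.
    by apply: boolp.contrapT => Hn; apply: H; exists j.
  have /andP [h1 h2] := Bq j.
  rewrite /g (bigD1 j) //=.
  have : r2 <= (q j ord0 - c0) * (q j ord0 - c0).
    have [e|e] : q j ord0 = a \/ q j ord0 = b.
      case: (ltrP a (q j ord0)) => h3; last by left; lra.
      case: (ltrP (q j ord0) b) => h4; last by right; lra.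
      by exfalso; apply: Hj; rewrite h3 h4.
      by rewrite e /r2 /c0; lra.
    by rewrite e /r2 /c0; lra.
  have : 0 <= \sum_(i < din | i != j) (q i ord0 - c0) * (q i ord0 - c0).
    by apply: sumr_ge0 => i _; rewrite -expr2 sqr_ge0.
  lra.
have C1 := comp q Bq.
have C2 := comp _ ccB.
rewrite gc in C2.
move: C1 C2; rewrite !ler_norml => /andP [c1 c2] /andP [c3 c4].
lra.
Qed.
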